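(* Fix integers $N\ge 2$ and $K\ge 1$. There exists a Boolean tensor $\mathcal{B}\in\{0,1\}^{N\times N\times K}$ such that no ranking tensor in $\pi(\mathcal{M}^{\text{TransE}})$ is consistent with $\mathcal{B}$.
   Context: A score-based model assigns a score $s_k(i,j)\in\mathbb{R}$ to each triple, $i,j\in\{1,\dots,N\}$, $k\in\{1,\dots,K\}$; its scoring tensor has frontal slices $\mathbf{S}_k$ with $[\mathbf{S}_k]_{ij}=s_k(i,j)$. For a real $N\times N$ matrix $\mathbf{S}$, $\pi(\mathbf{S})$ is the matrix of dense ranks: $\pi_{ij}(\mathbf{S})=1+$ (number of distinct values among entries of $\mathbf{S}$ strictly larger than $s_{ij}$). For tensors, $\pi$ acts slicewise; for a set $X$, $\pi(X)=\{\pi(x):x\in X\}$. TransE of size $r$: parameters $\mathbf{A}\in\mathbb{R}^{N\times r}$ (rows $\mathbf{a}_i$), $\mathbf{R}\in\mathbb{R}^{K\times r}$ (rows $\mathbf{r}_k$), score $-\|\mathbf{a}_i+\mathbf{r}_k-\mathbf{a}_j\|_2^2$; $\mathcal{M}^{\text{TransE}}$ is the set of scoring tensors of all TransE models of all sizes $r\in\mathbb{N}^+$. A ranking tensor $\mathcal{P}$ is consistent with a Boolean tensor $\mathcal{B}$ if for every $k$ and all $i,j,i',j'$: $b_{ijk}=1$ and $b_{i'j'k}=0$ imply $p_{ijk}<p_{i'j'k}$. *)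

(* Defs.v *)
From HB Require Import structures.
From mathcomp Require Import all_boot all_order all_algebra.
From mathcomp Require Import reals.
Set Implicit Arguments. Unset Strict Implicit. Unset Printing Implicit Defensive.
Import Order.TTheory GRing.Theory Num.Theory.
Local Open Scope ring_scope.

Definition dense_rank (R : realType) (N : nat) (S : 'I_N -> 'I_N -> R)
    (i j : 'I_N) : nat :=
  (size (undup [seq S x.1 x.2 | x <- enum [pred x : 'I_N * 'I_N | S i j < S x.1 x.2]])).+1.

Definition pi_tensor (R : realType) (N K : nat) (T : 'I_N -> 'I_N -> 'I_K -> R)
    : 'I_N -> 'I_N -> 'I_K -> nat :=
  fun i j k => dense_rank (fun i' j' => T i' j' k) i j.

Definition transE_score (R : realType) (N K r : nat)
    (A : 'M[R]_(N, r)) (Rel : 'M[R]_(K, r)) : 'I_N -> 'I_N -> 'I_K -> R :=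
  fun i j k => - \sum_(l < r) (A i l + Rel k l - A j l) ^+ 2.

Definition in_pi_TransE (R : realType) (N K : nat) (P : 'I_N -> 'I_N -> 'I_K -> nat) : Prop :=
  exists r : nat, (0 < r)%N /\
    exists (A : 'M[R]_(N, r)) (Rel : 'M[R]_(K, r)),
      forall i j k, P i j k = pi_tensor (transE_score A Rel) i j k.

Definition consistent (N K : nat) (P : 'I_N -> 'I_N -> 'I_K -> nat)
    (B : 'I_N -> 'I_N -> 'I_K -> bool) : Prop :=
  forall (k : 'I_K) (i j i' j' : 'I_N),
    B i j k = true -> B i' j' k = false -> (P i j k < P i' j' k)%N.

(* Main.v *)
Require Import Defs.
From mathcomp Require Import all_boot all_order all_algebra.
From mathcomp Require Import reals.
Import Order.TTheory GRing.Theory Num.Theory.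
Local Open Scope ring_scope.

Theorem theorem10 (R : realType) (N K : nat) :
  (2 <= N)%N -> (1 <= K)%N ->
  exists B : 'I_N -> 'I_N -> 'I_K -> bool,
    forall P : 'I_N -> 'I_N -> 'I_K -> nat,
      in_pi_TransE R P -> ~ consistent P B.
Proof.
move=> HN HK.
have H0 : (0 < N)%N by apply: leq_trans HN.
pose i0 : 'I_N := Ordinal H0.
pose i1 : 'I_N := Ordinal HN.
pose k0 : 'I_K := Ordinal HK.
exists (fun i j (k : 'I_K) => (val i == 0%N) && (val j == 0%N)).
move=> P [r [_ [A [Rel HP]]]] Hc.
have := Hc k0 i0 i0 i1 i1 erefl erefl.
rewrite !HP /pi_tensor /dense_rank /=.
have E : transE_score A Rel i0 i0 k0 = transE_score A Rel i1 i1 k0.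
  rewrite /transE_score; congr (- _); apply: eq_bigr => l _.
  by rewrite addrAC subrr add0r addrAC subrr add0r.
by rewrite E ltnn.
Qed.
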